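(* Assume the setting of the context. Then for all sufficiently small $\epsilon>0$ there exist numbers $0<\widetilde{x}_-<\widetilde{x}_+$, depending only on $C_0,C_2,C_3,\epsilon$ (and the chosen function $\lambda$), such that for every $\sigma\in\Sigma$ $$x\in[\widetilde{x}_-,\widetilde{x}_+]\quad\Longrightarrow\quad Q^\epsilon_\sigma\cdot(D_{\kappa_\sigma}\cdot x)\;\le\;\Lambda\,(D_{\kappa_\sigma}\cdot x),$$ and moreover $$\lim_{\epsilon\to0}\frac{\lambda\,\widetilde{x}_-}{\epsilon}=\frac{C_2e^{2C_0}}{2C_0},\qquad\lim_{\epsilon\to0}\frac{\epsilon\,\widetilde{x}_+}{\lambda}=\frac{2C_0}{C_2e^{2C_0}}.$$
   Context: Let $(\Sigma,\mathbf{p})$ be a probability space. For each $\sigma\in\Sigma$ and $\epsilon\in[-1,1]$ let real numbers $a_\sigma,b_\sigma$, $\kappa_\sigma>0$ and $\alpha^\epsilon_\sigma,\beta^\epsilon_\sigma,\gamma^\epsilon_\sigma,\delta^\epsilon_\sigma$ be given, with $A^\epsilon_\sigma=\begin{pmatrix}\alpha^\epsilon_\sigma&\beta^\epsilon_\sigma\\ \gamma^\epsilon_\sigma&\delta^\epsilon_\sigma\end{pmatrix}$. Assume that for all $\sigma$: $|\log(\kappa_\sigma)|\le C_0$, $a_\sigma-|b_\sigma|\ge C_1$, $a_\sigma+|b_\sigma|\le C_2$, and $\|A^\epsilon_\sigma\|\le C_3$ for $|\epsilon|\le1$, with constants $C_0,C_1,C_2,C_3\in(0,\infty)$. On $\mathbb{R}\cup\{\infty\}$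 define $D_{\kappa}\cdot x=\kappa^2x$ and $$Q^\epsilon_\sigma\cdot x=\frac{(1+\epsilon^2\alpha^\epsilon_\sigma)x+(a_\sigma-b_\sigma-\epsilon\beta^\epsilon_\sigma)\epsilon}{1+\epsilon^2\delta^\epsilon_\sigma-(a_\sigma+b_\sigma+\epsilon\gamma^\epsilon_\sigma)\epsilon x}.$$ Let $\lambda=\lambda(\epsilon)>0$ be a function of $\epsilon>0$ with $\lim_{\epsilon\to0}\lambda=0$ and $\lim_{\epsilon\to0}\frac{\log(\lambda)}{\log(\epsilon)}=0$ (hence also $\epsilon/\lambda\to0$), and set $\Lambda=e^{2C_0\lambda}$. *)

(* Defs.v *)
From Stdlib Require Import Reals Lra.
From Coquelicot Require Import Coquelicot.
Open Scope R_scope.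

(* The extended line R ∪ {∞}: [Some x] is the real x, [None] is ∞. *)
Definition RP1 := option R.

Definition Dact (kappa : R) (p : RP1) : RP1 :=
  match p with Some x => Some (kappa ^ 2 * x) | None => None end.

Definition mobius (m11 m12 m21 m22 : R) (p : RP1) : RP1 :=
  match p with
  | Some x => let d := m21 * x + m22 in
              if Req_EM_T d 0 then None else Some ((m11 * x + m12) / d)
  | None => if Req_EM_T m21 0 then None else Some (m11 / m21)
  end.

Definition Qact (eps a b al be ga de : R) (p : RP1) : RP1 :=
  mobius (1 + eps ^ 2 * al) ((a - b - eps * be) * eps)
         (- ((a + b + eps * ga) * eps)) (1 + eps ^ 2 * de) p.

Definition le_RP1 (p : RP1) (r : R) : Prop :=
  match p with Some q => q <= r | None => False end.

Definition opnorm_le (al be ga de c : R) : Prop :=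
  forall u v : R, sqrt ((al * u + be * v) ^ 2 + (ga * u + de * v) ^ 2)
                  <= c * sqrt (u ^ 2 + v ^ 2).

(* Main.v *)
Require Import Defs.
From Stdlib Require Import Reals Lra Psatz.
From Coquelicot Require Import Coquelicot.
Open Scope R_scope.
From Stdlib Require Import Reals.
Lemma abs_bnd x c : Rabs x <= c -> - c <= x <= c.
Proof. intros H. pose proof (Rle_abs x). pose proof (Rle_abs (-x)). rewrite Rabs_Ropp in *. lra. Qed.

Lemma pointwise (C0 C2 C3 e t L a b al be ga de y r w u : R) :
  0 < C0 -> 0 < C2 -> 0 < C3 -> 0 < e -> 0 < t -> u * t = e ->
  1 + 2*C0*t <= L -> L <= 1 + 4*C0*t -> L <= 2 ->
  Rabs al <= C3 -> Rabs be <= C3 -> Rabs ga <= C3 -> Rabs de <= C3 ->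
  a + Rabs b <= C2 ->
  0 < w -> 0 < r -> w*r*r - r + w = 0 -> r <= y -> y <= / r ->
  w * (2*C0 - 3*C3*e*u) = u * ((1 + 4*C0*t) * (C2 + e*C3)) ->
  C0 <= 2*C0 - 3*C3*e*u ->
  C3 * (e*e) <= 1/4 -> 2*C0*t <= 1/4 ->
  0 < 1 + e^2*de - (a+b+e*ga)*e*y /\
  (1 + e^2*al)*y + (a-b-e*be)*e <= L * y * (1 + e^2*de - (a+b+e*ga)*e*y).
Proof.
  intros HC0 HC2 HC3 He Ht Hut HL1 HL2 HL3 Hal Hbe Hga Hde Hab Hw Hr Hwr Hry Hyr Hdef Hden Hce Hct.
  set (c := C2 + e*C3).
  assert (Hy : 0 < y) by lra.
  apply abs_bnd in Hal. apply abs_bnd in Hbe.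
  apply abs_bnd in Hga. apply abs_bnd in Hde.
  assert (Hb1 : b <= Rabs b) by apply Rle_abs.
  assert (Hb2 : - b <= Rabs b) by (rewrite <- Rabs_Ropp; apply Rle_abs).
  assert (Hab1 : a + b + e*ga <= c) by (unfold c; nra).
  assert (Hab2 : a - b - e*be <= c) by (unfold c; nra).
  assert (Hry1 : r * y <= 1).
  { apply Rmult_le_compat_l with (r:=r) in Hyr; [|lra]. rewrite Rinv_r in Hyr; lra. }
  assert (Hwr2 : w * (r*r+1) = r) by lra.
  assert (Hwy : w * (y*y+1) <= y).
  { assert (H1 : r*(y*y+1) <= y*(r*r+1)) by nra.
    assert (H2 : r*(w*(y*y+1)) <= r*y) by nra.
    apply Rmult_le_reg_l with r; lra. }
  assert (Hwler : w <= r) by nra.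
  set (P := 2*C0*t - 3*C3*e*e).
  assert (HP : e * c * (1 + 4*C0*t) = w * P).
  { transitivity ((w*(2*C0 - 3*C3*e*u))*t).
    - rewrite Hdef. unfold c. rewrite <- Hut. ring.
    - unfold P. rewrite <- Hut. ring. }
  assert (HP0 : 3*C3*e*e <= C0*t).
  { replace (3*C3*e*e) with ((3*C3*e*u)*t) by (rewrite <- Hut; ring).
    apply Rmult_le_compat_r; lra. }
  assert (HPpos : 0 <= P) by (unfold P; lra).
  assert (HPle : P <= 2*C0*t) by (unfold P; nra).
  assert (Hc0 : 0 < c) by (unfold c; nra).
  assert (He2 : e^2 = e*e) by ring. rewrite He2.
  assert (H3 : e*e*(-C3) <= e*e*de) by (apply Rmult_le_compat_l; nra).
  assert (H4 : e*e*al <= e*e*C3) by (apply Rmult_le_compat_l; nra).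
  assert (H2 : (a+b+e*ga)*e*y <= c*e*y).
  { apply Rmult_le_compat_r; [lra|]; apply Rmult_le_compat_r; lra. }
  assert (H5 : (a-b-e*be)*e <= c*e) by (apply Rmult_le_compat_r; lra).
  split.
  -
    assert (Hwy1 : w * y <= 1) by nra.
    assert (H1 : c * e * y <= P).
    { assert (c*e*y*(1+4*C0*t) = w*y*P) by (transitivity ((e*c*(1+4*C0*t))*y); [ring | rewrite HP; ring]).
      assert (w*y*P <= 1*P) by (apply Rmult_le_compat_r; lra).
      assert (0 <= c*e*y) by (apply Rmult_le_pos; [apply Rmult_le_pos|]; lra).
      assert (0 <= c*e*y*(4*C0*t)) by (apply Rmult_le_pos; [|nra]; lra).
      assert (c*e*y*(1+4*C0*t) = c*e*y + c*e*y*(4*C0*t)) by ring.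
      lra. }
    lra.
  - assert (H1 : L * c * e * (y*y+1) <= P * y).
    { assert (E1 : L*c*e*(y*y+1)*(1+4*C0*t) = L*(w*(y*y+1))*P) by (transitivity (L*(y*y+1)*(e*c*(1+4*C0*t))); [ring | rewrite HP; ring]).
      assert (E2 : L*(w*(y*y+1))*P <= L*y*P).
      { apply Rmult_le_compat_r; [lra|]. apply Rmult_le_compat_l; lra. }
      assert (E3 : L*y*P <= (1+4*C0*t)*(P*y)).
      { replace (L*y*P) with (L*(P*y)) by ring. apply Rmult_le_compat_r; [nra|lra]. }
      apply Rmult_le_reg_r with (1+4*C0*t); [nra|]. lra. }
    assert (F1 : L*y*(e*e*(-C3)) <= L*y*(e*e*de)) by (apply Rmult_le_compat_l; nra).
    assert (F2 : L*y*((a+b+e*ga)*e*y) <= L*y*(c*e*y)) by (apply Rmult_le_compat_l; nra).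
    assert (F3 : e*e*al*y <= e*e*C3*y) by (apply Rmult_le_compat_r; lra).
    assert (F4 : c*e <= L*c*e) by (assert (0 <= c*e) by nra; nra).
    assert (F5 : L*(e*e*C3)*y <= 2*(e*e*C3)*y) by (apply Rmult_le_compat_r; [lra|]; apply Rmult_le_compat_r; nra).
    assert (F6 : (2*C0*t)*y <= (L-1)*y) by (apply Rmult_le_compat_r; lra).
    assert (F7 : P*y = (2*C0*t)*y - 3*(C3*(e*e))*y) by (unfold P; ring).
    nra.
Qed.

Section Lim.
Context {T : Type} {F : (T -> Prop) -> Prop} {FF : Filter F}.

Lemma lim_plus (f g : T -> R) a b : filterlim f F (locally a) -> filterlim g F (locally b) ->
  filterlim (fun x => f x + g x) F (locally (a + b)).
Proof. intros Hf Hg. eapply filterlim_comp_2; [exact Hf|exact Hg|]. exact (filterlim_plus a b). Qed.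

Lemma lim_mult (f g : T -> R) a b : filterlim f F (locally a) -> filterlim g F (locally b) ->
  filterlim (fun x => f x * g x) F (locally (a * b)).
Proof. intros Hf Hg. eapply filterlim_comp_2; [exact Hf|exact Hg|]. exact (filterlim_mult a b). Qed.

Lemma lim_opp (f : T -> R) a : filterlim f F (locally a) -> filterlim (fun x => - f x) F (locally (- a)).
Proof. intros Hf. eapply filterlim_comp; [exact Hf|]. exact (filterlim_opp a). Qed.

Lemma lim_minus (f g : T -> R) a b : filterlim f F (locally a) -> filterlim g F (locally b) ->
  filterlim (fun x => f x - g x) F (locally (a - b)).
Proof. intros. apply lim_plus; auto. apply lim_opp; auto. Qed.

Lemma lim_inv (f : T -> R) a : filterlim f F (locally a) -> a <> 0 ->
  filterlim (fun x => / f x) F (locally (/ a)).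
Proof. intros Hf Ha. eapply filterlim_comp; [exact Hf|]. exact (continuous_Rinv a Ha). Qed.

Lemma lim_div (f g : T -> R) a b : filterlim f F (locally a) -> filterlim g F (locally b) -> b <> 0 ->
  filterlim (fun x => f x / g x) F (locally (a / b)).
Proof. intros. apply lim_mult; auto. apply lim_inv; auto. Qed.

Lemma lim_sqrt (f : T -> R) a : filterlim f F (locally a) ->
  filterlim (fun x => sqrt (f x)) F (locally (sqrt a)).
Proof. intros Hf. eapply filterlim_comp; [exact Hf|]. exact (continuous_sqrt a). Qed.

Lemma lim_eq (f : T -> R) a b : filterlim f F (locally a) -> a = b -> filterlim f F (locally b).
Proof. intros H <-; exact H. Qed.

End Lim.

Lemma lim_id0 : filterlim (fun x : R => x) (at_right 0) (locally 0).
Proof. intros P HP. unfold filtermap, at_right, within. apply filter_imp with P; auto. Qed.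

Lemma ev_lt (T : Type) (F : (T -> Prop) -> Prop) {FF : Filter F} (f : T -> R) d :
  filterlim f F (locally 0) -> 0 < d -> F (fun x => f x < d).
Proof.
  intros Hf Hd. generalize (proj1 (filterlim_locally f 0) Hf (mkposreal d Hd)).
  apply filter_imp. intros x Hx. change (Rabs (f x + - 0) < d) in Hx.
  rewrite Ropp_0, Rplus_0_r in Hx. pose proof (Rle_abs (f x)). lra.
Qed.

Lemma ev_pos (P : R -> Prop) : (forall e, 0 < e -> P e) -> at_right 0 P.
Proof. intros H. exists (mkposreal 1 Rlt_0_1). intros y _ Hy. auto. Qed.

Lemma ev_extract (P : R -> Prop) : at_right 0 P -> exists e0, 0 < e0 /\ forall e, 0 < e < e0 -> P e.
Proof.
  intros [d Hd]. exists d. split; [apply cond_pos|]. intros e He. apply Hd; [|lra].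
  change (Rabs (e + - 0) < d). rewrite Ropp_0, Rplus_0_r, Rabs_right; lra.
Qed.

Lemma u_lim (lam : R -> R) :
  (forall eps, 0 < eps -> 0 < lam eps) ->
  filterlim (fun eps => ln (lam eps) / ln eps) (at_right 0) (locally 0) ->
  filterlim (fun e => e / lam e) (at_right 0) (locally 0).
Proof.
  intros Hpos Hlog. apply filterlim_locally. intros eps.
  assert (H1 := ev_lt _ _ _ (1/2) Hlog ltac:(lra)).
  assert (H2 := ev_lt _ _ _ (Rmin 1 (eps*eps)) lim_id0 ltac:(apply Rmin_pos; [lra| pose proof (cond_pos eps); nra])).
  assert (H3 := ev_pos (fun e => 0 < e) (fun e h => h)).
  generalize (filter_and _ _ (filter_and _ _ H1 H2) H3). apply filter_imp.
  intros e [[Ha Hb] Hc]. change (Rabs (e / lam e + - 0) < eps).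
  rewrite Ropp_0, Rplus_0_r.
  pose proof (Hpos e Hc) as Hl.
  assert (Hd1 := Rmin_l 1 (eps*eps)). assert (Hd2 := Rmin_r 1 (eps*eps)).
  assert (Hlne : ln e < 0) by (rewrite <- ln_1; apply ln_increasing; lra).
  assert (Hln : ln e < 2 * ln (lam e)).
  { assert (ln (lam e) / ln e * ln e = ln (lam e)) by (field; lra).
    pose proof (Rle_abs (ln (lam e) / ln e)). nra. }
  assert (Hsq : e < lam e * lam e).
  { apply ln_lt_inv; [lra|nra|]. rewrite ln_mult; lra. }
  assert (Hu0 : 0 < e / lam e) by (apply Rdiv_lt_0_compat; lra).
  rewrite Rabs_right by lra.
  assert (Hu2 : (e / lam e) * (e / lam e) < eps * eps).
  { replace ((e / lam e) * (e / lam e)) with (e * e / (lam e * lam e)) by (field; lra).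
    apply Rlt_le_trans with e; [|lra].
    apply Rmult_lt_reg_r with (lam e * lam e); [nra|].
    field_simplify; [nra|lra]. }
  pose proof (cond_pos eps). nra.
Qed.
Definition uf (lam : R -> R) (e : R) := e / lam e.
Definition qf (C0 C2 C3 : R) lam e :=
  (1 + 4*C0*lam e) * (C2 + e*C3) / (2*C0 - 3*C3*e*uf lam e).
Definition wf C0 C2 C3 lam e := uf lam e * qf C0 C2 C3 lam e.
Definition sf C0 C2 C3 lam e := sqrt (1 - 4*(wf C0 C2 C3 lam e * wf C0 C2 C3 lam e)).
Definition rf C0 C2 C3 lam e := 2 * wf C0 C2 C3 lam e / (1 + sf C0 C2 C3 lam e).

Lemma exp_le_mono x y : x <= y -> exp x <= exp y.
Proof. intros [H|H]; [left; apply exp_increasing; auto | subst; lra]. Qed.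

Lemma kappa_bounds C0 k : 0 < k -> Rabs (ln k) <= C0 -> exp (-(2*C0)) <= k^2 <= exp (2*C0).
Proof.
  intros Hk Hl. apply abs_bnd in Hl.
  replace (k^2) with (exp (2 * ln k)).
  - split; apply exp_le_mono; lra.
  - replace (2 * ln k) with (ln k + ln k) by ring. rewrite exp_plus, exp_ln by auto. ring.
Qed.

Lemma opnorm_bounds al be ga de c : opnorm_le al be ga de c ->
  Rabs al <= c /\ Rabs be <= c /\ Rabs ga <= c /\ Rabs de <= c.
Proof.
  intros H. pose proof (H 1 0) as H1. pose proof (H 0 1) as H2.
  replace ((al * 1 + be * 0) ^ 2 + (ga * 1 + de * 0) ^ 2) with (al² + ga²) in H1 by (unfold Rsqr; ring).
  replace ((al * 0 + be * 1) ^ 2 + (ga * 0 + de * 1) ^ 2) with (be² + de²) in H2 by (unfold Rsqr; ring).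
  replace (1 ^ 2 + 0 ^ 2) with 1 in H1 by ring. replace (0 ^ 2 + 1 ^ 2) with 1 in H2 by ring.
  rewrite sqrt_1, Rmult_1_r in H1, H2.
  rewrite <- !sqrt_Rsqr_abs.
  assert (0 <= al²) by apply Rle_0_sqr. assert (0 <= be²) by apply Rle_0_sqr.
  assert (0 <= ga²) by apply Rle_0_sqr. assert (0 <= de²) by apply Rle_0_sqr.
  repeat split.
  - apply Rle_trans with (sqrt (al² + ga²)); [apply sqrt_le_1_alt; lra | auto].
  - apply Rle_trans with (sqrt (be² + de²)); [apply sqrt_le_1_alt; lra | auto].
  - apply Rle_trans with (sqrt (al² + ga²)); [apply sqrt_le_1_alt; lra | auto].
  - apply Rle_trans with (sqrt (be² + de²)); [apply sqrt_le_1_alt; lra | auto].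
Qed.

Lemma Lam_bounds s : 0 <= s <= 1/4 -> 1 + s <= exp s /\ exp s <= 1 + 2*s /\ exp s <= 2.
Proof.
  intros Hs. pose proof (exp_ineq1_le s). pose proof (exp_ineq1_le (-s)).
  assert (E : exp s * exp (-s) = 1) by (rewrite <- exp_plus, Rplus_opp_r, exp_0; auto).
  pose proof (exp_pos s). pose proof (exp_pos (-s)).
  assert (exp s * (1 - s) <= 1) by nra.
  assert (exp s <= 2) by nra.
  split; [lra|]. split; nra.
Qed.

Lemma cond_facts C0 C2 C3 lam e :
  0 < C0 -> 0 < C2 -> 0 < C3 -> 0 < e -> 0 < lam e ->
  2*C0*lam e <= 1/4 -> e <= 1 -> 3*C3*e*uf lam e <= C0 ->
  uf lam e < exp (-(2*C0)) * C0 / (4*(C2+C3)) ->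
  0 < uf lam e /\ uf lam e * lam e = e /\
  0 < qf C0 C2 C3 lam e /\ 0 < wf C0 C2 C3 lam e /\ 0 < rf C0 C2 C3 lam e /\
  0 < 1 + sf C0 C2 C3 lam e /\
  wf C0 C2 C3 lam e * rf C0 C2 C3 lam e * rf C0 C2 C3 lam e - rf C0 C2 C3 lam e + wf C0 C2 C3 lam e = 0 /\
  wf C0 C2 C3 lam e * (2*C0 - 3*C3*e*uf lam e) = uf lam e * ((1 + 4*C0*lam e) * (C2 + e*C3)) /\
  C0 <= 2*C0 - 3*C3*e*uf lam e /\
  exp (2*C0) * rf C0 C2 C3 lam e < exp (-(2*C0)) / rf C0 C2 C3 lam e.
Proof.
  intros HC0 HC2 HC3 He Ht Hct He1 Hden Hus.
  set (t := lam e) in *. set (u := uf lam e) in *.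
  assert (Hu : 0 < u) by (unfold u, uf; apply Rdiv_lt_0_compat; auto).
  assert (Hut : u * t = e) by (unfold u, uf; fold t; field; lra).
  set (D := 2*C0 - 3*C3*e*u) in *.
  assert (HD : C0 <= D) by (unfold D; lra).
  set (N := (1 + 4*C0*t) * (C2 + e*C3)).
  assert (HN0 : 0 < N) by (unfold N; apply Rmult_lt_0_compat; nra).
  assert (HN1 : N <= 2*(C2+C3)) by (unfold N; apply Rmult_le_compat; nra).
  assert (Hq : qf C0 C2 C3 lam e = N / D) by reflexivity.
  set (q := qf C0 C2 C3 lam e) in *.
  assert (Hq0 : 0 < q) by (rewrite Hq; apply Rdiv_lt_0_compat; lra).
  assert (Hq1 : q * C0 <= 2*(C2+C3)).
  { rewrite Hq. apply Rle_trans with N; [|lra].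
    unfold Rdiv. rewrite Rmult_assoc. apply Rle_trans with (N * 1); [|lra].
    apply Rmult_le_compat_l; [lra|]. apply Rmult_le_reg_r with D; [lra|].
    replace (/ D * C0 * D) with C0 by (field; lra). lra. }
  set (En := exp (-(2*C0))).
  assert (HEn : En < 1) by (unfold En; rewrite <- exp_0; apply exp_increasing; lra).
  assert (HEn0 : 0 < En) by apply exp_pos.
  assert (HEE : exp (2*C0) * En = 1) by (unfold En; rewrite <- exp_plus, Rplus_opp_r, exp_0; auto).
  assert (Hw : wf C0 C2 C3 lam e = u * q) by reflexivity.
  set (w := wf C0 C2 C3 lam e) in *.
  assert (Hw0 : 0 < w) by (rewrite Hw; nra).
  assert (Hw1 : w < En / 2).
  { rewrite Hw. 
    assert (u * (q * C0) < En * C0 / (4 * (C2 + C3)) * (2 * (C2 + C3))).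
    { apply Rle_lt_trans with (u * (2*(C2+C3))); [apply Rmult_le_compat_l; lra|].
      apply Rmult_lt_compat_r; [lra|]. exact Hus. }
    replace (En * C0 / (4 * (C2 + C3)) * (2 * (C2 + C3))) with ((En/2) * C0) in H by (field; lra).
    nra. }
  assert (Hs : sf C0 C2 C3 lam e = sqrt (1 - 4*(w*w))) by reflexivity.
  set (s := sf C0 C2 C3 lam e) in *.
  assert (Hs0 : 0 <= s) by (rewrite Hs; apply sqrt_pos).
  assert (Hss : s * s = 1 - 4*(w*w)) by (rewrite Hs; apply sqrt_sqrt; nra).
  assert (Hr : rf C0 C2 C3 lam e = 2 * w / (1 + s)) by reflexivity.
  set (r := rf C0 C2 C3 lam e) in *.
  assert (Hr0 : 0 < r) by (rewrite Hr; apply Rdiv_lt_0_compat; lra).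
  assert (Hrs : r * (1 + s) = 2 * w) by (rewrite Hr; field; lra).
  assert (Hr1 : r <= 2 * w) by nra.
  split; [auto|]. split; [auto|]. split; [auto|]. split; [auto|]. split; [auto|].
  split; [lra|]. split.
  { apply Rmult_eq_reg_r with ((1+s)*(1+s)); [|nra].
    replace ((w * r * r - r + w) * ((1 + s) * (1 + s))) with
      (w * (r*(1+s)) * (r*(1+s)) - (r*(1+s))*(1+s) + w*((1+s)*(1+s))) by ring.
    rewrite Hrs. nra. }
  split.
  { rewrite Hw, Hq. fold N. fold D. field. lra. }
  split; [auto|].
  assert (exp (2*C0) * r < 1).
  { rewrite <- HEE. apply Rmult_lt_compat_l; [apply exp_pos|lra]. }
  apply Rmult_lt_reg_r with r; [auto|]. replace (En / r * r) with En by (field; lra).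
  nra.
Qed.

Ltac limt H1 H2 := repeat (first [ exact H1 | exact H2 | apply lim_div | apply lim_plus | apply lim_minus | apply lim_mult
  | apply lim_sqrt | apply lim_opp | exact lim_id0 | exact H1 | exact H2 | apply filterlim_const ]).

Theorem lemma6 (C0 C2 C3 : R) (lam : R -> R)
  (hC0 : 0 < C0) (hC2 : 0 < C2) (hC3 : 0 < C3)
  (hlam_pos : forall eps, 0 < eps -> 0 < lam eps)
  (hlam_lim : filterlim lam (at_right 0) (locally 0))
  (hlam_log : filterlim (fun eps => ln (lam eps) / ln eps) (at_right 0) (locally 0)) :
  exists xm xp : R -> R,
    filterlim (fun eps => lam eps * xm eps / eps) (at_right 0)
              (locally (C2 * exp (2 * C0) / (2 * C0))) /\
    filterlim (fun eps => eps * xp eps / lam eps) (at_right 0)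
              (locally (2 * C0 / (C2 * exp (2 * C0)))) /\
    exists eps0 : R, 0 < eps0 /\
      forall eps : R, 0 < eps < eps0 ->
        0 < xm eps < xp eps /\
        forall (C1 : R) (Sigma : Type)
               (a b kappa : Sigma -> R)
               (alpha beta gamma delta : Sigma -> R -> R),
          0 < C1 ->
          (forall s, 0 < kappa s) ->
          (forall s, Rabs (ln (kappa s)) <= C0) ->
          (forall s, a s - Rabs (b s) >= C1) ->
          (forall s, a s + Rabs (b s) <= C2) ->
          (forall s e, Rabs e <= 1 ->
             opnorm_le (alpha s e) (beta s e) (gamma s e) (delta s e) C3) ->
          forall (s : Sigma) (x : R), xm eps <= x <= xp eps ->
            le_RP1 (Qact eps (a s) (b s) (alpha s eps) (beta s eps)
                         (gamma s eps) (delta s eps)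
                         (Dact (kappa s) (Some x)))
                   (exp (2 * C0 * lam eps) * (kappa s ^ 2 * x)).
Proof.
  assert (Hu : filterlim (uf lam) (at_right 0) (locally 0)) by (apply u_lim; auto).
  set (Cond := fun e => 0 < e /\ 0 < lam e /\ 2*C0*lam e <= 1/4 /\ e <= 1 /\ C3*(e*e) <= 1/4 /\
     3*C3*e*uf lam e <= C0 /\ uf lam e < exp (-(2*C0)) * C0 / (4*(C2+C3))).
  assert (HC : at_right 0 Cond).
  { assert (A1 := ev_lt _ _ _ (1/(8*C0)) hlam_lim ltac:(apply Rdiv_lt_0_compat; lra)).
    assert (A2 := ev_lt _ _ _ (Rmin 1 (1/(4*C3))) lim_id0 ltac:(apply Rmin_pos; [lra|apply Rdiv_lt_0_compat; lra])).
    assert (A3 := ev_lt _ _ _ (Rmin (C0/(3*C3)) (exp (-(2*C0)) * C0 / (4*(C2+C3)))) Hu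
      ltac:(apply Rmin_pos; apply Rdiv_lt_0_compat; try apply Rmult_lt_0_compat; try apply exp_pos; lra)).
    assert (A4 := ev_pos (fun e => 0 < e) (fun e h => h)).
    generalize (filter_and _ _ (filter_and _ _ A1 A2) (filter_and _ _ A3 A4)). apply filter_imp.
    intros e [[B1 B2] [B3 B4]].
    pose proof (hlam_pos e B4) as Hl.
    pose proof (Rmin_l 1 (1/(4*C3))). pose proof (Rmin_r 1 (1/(4*C3))).
    pose proof (Rmin_l (C0/(3*C3)) (exp (-(2*C0)) * C0 / (4*(C2+C3)))).
    pose proof (Rmin_r (C0/(3*C3)) (exp (-(2*C0)) * C0 / (4*(C2+C3)))).
    assert (Hu0 : 0 < uf lam e) by (unfold uf; apply Rdiv_lt_0_compat; auto).
    unfold Cond. repeat split; try lra.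
    - assert (lam e * (8*C0) < 1/(8*C0) * (8*C0)) by (apply Rmult_lt_compat_r; lra).
      replace (1/(8*C0)*(8*C0)) with 1 in H3 by (field; lra). lra.
    - assert (e * (4*C3) < 1/(4*C3) * (4*C3)) by (apply Rmult_lt_compat_r; lra).
      replace (1/(4*C3)*(4*C3)) with 1 in H3 by (field; lra). nra.
    - assert (uf lam e * (3*C3) < C0/(3*C3) * (3*C3)) by (apply Rmult_lt_compat_r; lra).
      replace (C0/(3*C3)*(3*C3)) with C0 in H3 by (field; lra). nra. }
  exists (fun e => exp (2*C0) * rf C0 C2 C3 lam e), (fun e => exp (-(2*C0)) / rf C0 C2 C3 lam e).
  split; [|split].
  - apply filterlim_ext_loc with (f := fun e => exp (2*C0) * (2 * qf C0 C2 C3 lam e / (1 + sf C0 C2 C3 lam e))).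
    { apply ev_pos. intros e He. pose proof (hlam_pos e He).
      assert (0 <= sf C0 C2 C3 lam e) by apply sqrt_pos.
      unfold rf, wf, uf. field. lra. }
    unfold sf, wf, qf.
    eapply lim_eq; [limt hlam_lim Hu|].
    all: try (match goal with |- context [sqrt ?z] => replace z with 1 by (field; lra) end; rewrite sqrt_1).
    all: try (intro; lra).
    all: try (field; repeat split; intro; lra).
    all: try (match goal with |- @eq _ ?a ?b => change (@eq R a b) end; replace ((R1 + R1) * C0 + - ((R1 + (R1 + R1)) * C3 * 0 * 0)) with (2*C0) by ring;
      replace (1 + (R1+R1)*(R1+R1)*C0*0) with 1 by ring; replace (C2 + 0*C3) with C2 by ring;
      replace (R1 + R1) with 2 by ring; field; lra).
  - apply filterlim_ext_loc with (f := fun e => exp (-(2*C0)) * ((1 + sf C0 C2 C3 lam e) / (2 * qf C0 C2 C3 lam e))).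
    { generalize HC. apply filter_imp. intros e Ce. destruct Ce as (Ce & Cl & Ct & Ce1 & Cee & Cd & Cus).
      destruct (cond_facts C0 C2 C3 lam e) as (Fu & Fut & Fq & Fw & Fr & Fs & Fwr & Fdef & Fden & Fx); auto.
      unfold rf, wf, uf. field. repeat split; lra. }
    unfold sf, wf, qf.
    eapply lim_eq; [limt hlam_lim Hu|].
    all: try (match goal with |- context [sqrt ?z] => replace z with 1 by (field; lra) end; rewrite sqrt_1).
    all: try (intro; lra).
    all: try (replace ((R1 + R1) * C0 + - ((R1 + (R1 + R1)) * C3 * 0 * 0)) with (2*C0) by ring;
      replace (1 + (R1+R1)*(R1+R1)*C0*0) with 1 by ring; replace (C2 + 0*C3) with C2 by ring;
      replace (R1 + R1) with 2 by ring).
    { replace (2 * (1 * C2 / (2 * C0))) with (C2 / C0) by (field; lra).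
      apply Rgt_not_eq, Rdiv_lt_0_compat; lra. }
    { match goal with |- @eq _ ?a ?b => change (@eq R a b) end.
      rewrite exp_Ropp. pose proof (exp_pos (2*C0)). field. repeat split; lra. }
  - destruct (ev_extract _ HC) as [e0 [He0 Hall]]. exists e0. split; [auto|].
    intros e He. destruct (Hall e He) as (Ce & Cl & Ct & Ce1 & Cee & Cd & Cus).
    destruct (cond_facts C0 C2 C3 lam e) as (Fu & Fut & Fq & Fw & Fr & Fs & Fwr & Fdef & Fden & Fx); auto.
    split.
    { split; [|auto]. apply Rmult_lt_0_compat; [apply exp_pos|auto]. }
    intros C1 Sigma a b kappa alpha beta gamma delta HC1 Hk Hlk Hab1 Hab2 Hop s x Hx.
    destruct (Lam_bounds (2*C0*lam e)) as (L1 & L2 & L3); [split; nra|].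
    destruct (opnorm_bounds _ _ _ _ _ (Hop s e ltac:(rewrite Rabs_right; lra))) as (O1 & O2 & O3 & O4).
    destruct (kappa_bounds C0 (kappa s) (Hk s) (Hlk s)) as [K1 K2].
    assert (HEE : exp (2*C0) * exp (-(2*C0)) = 1) by (rewrite <- exp_plus, Rplus_opp_r, exp_0; auto).
    set (r := rf C0 C2 C3 lam e) in *.
    set (y := kappa s ^ 2 * x).
    assert (Hx0 : 0 < x).
    { assert (0 < exp (2*C0) * r) by (apply Rmult_lt_0_compat; [apply exp_pos|auto]). lra. }
    assert (Hk0 : 0 < kappa s ^ 2) by (pose proof (exp_pos (-(2*C0))); lra).
    assert (Hy1 : r <= y).
    { unfold y. apply Rle_trans with (exp (-(2*C0)) * (exp (2*C0) * r)).
      - rewrite <- Rmult_assoc, (Rmult_comm (exp _)), HEE. lra.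
      - apply Rmult_le_compat; try lra. left; apply exp_pos. left; apply Rmult_lt_0_compat; [apply exp_pos|auto]. }

    assert (Hy2 : y <= / r).
    { unfold y. apply Rle_trans with (exp (2*C0) * (exp (-(2*C0)) / r)).
      - apply Rmult_le_compat; lra.
      - unfold Rdiv. rewrite <- Rmult_assoc, HEE. lra. }
    destruct (pointwise C0 C2 C3 e (lam e) (exp (2*C0*lam e)) (a s) (b s) (alpha s e) (beta s e)
      (gamma s e) (delta s e) y r (wf C0 C2 C3 lam e) (uf lam e)) as [D1 D2]; auto; try lra.
    unfold Qact, Dact, mobius. fold y.
    destruct (Req_EM_T _ 0) as [Hd|Hd].
    + exfalso. lra.
    + simpl. replace (e*(e*1)) with (e^2) by ring. apply Rmult_le_reg_r with (1 + e^2*delta s e - (a s + b s + e*gamma s e)*e*y); [auto|].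
      replace (((1 + e ^ 2 * alpha s e) * y + (a s - b s - e * beta s e) * e) /
          (- ((a s + b s + e * gamma s e) * e) * y + (1 + e ^ 2 * delta s e)) *
          (1 + e ^ 2 * delta s e - (a s + b s + e * gamma s e) * e * y))
        with ((1 + e ^ 2 * alpha s e) * y + (a s - b s - e * beta s e) * e) by (field; lra).
      lra.
Qed.
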